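(* Let $\mathfrak g$ be a profinite-dimensional $\mathbb K$-Lie algebra, let $\mathbf V(\mathfrak g)$ be a weakly complete unital algebra and $\nu\colon\mathfrak g\to[\mathbf V(\mathfrak g)]$ a continuous Lie algebra morphism (depending functorially on $\mathfrak g$) such that for every finite-dimensional unital associative $\mathbb K$-algebra $F$ and every continuous Lie algebra morphism $f\colon\mathfrak g\to[F]$ there exists a unique continuous unital algebra morphism $f'\colon\mathbf V(\mathfrak g)\to F$ with $f=f'\circ\nu$. Then $(\mathbf V(\mathfrak g),\nu)$ satisfies the universal property with respect to all weakly complete unital algebras $A$ (every continuous Lie algebra morphism $f\colon\mathfrak g\to[A]$ factors as $f=f'\circ\nu$ for a unique continuous unital algebra morphism $f'\colon\mathbf V(\mathfrak g)\to A$); consequently $\mathbf V(\mathfrak g)\cong\mathbf U(\mathfrak g)$ naturally, via an isomorphism carrying $\nu$ to $\lambda_{\mathfrak g}$.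
   Context: $\mathbb K\in\{\mathbb R,\mathbb C\}$. A topological $\mathbb K$-vector space is weakly complete if it is isomorphic to a power $\mathbb K^J$ (with the product topology) for some set $J$. A weakly complete unital algebra is a unital associative $\mathbb K$-algebra $A$ carrying a topology that makes it a weakly complete vector space and makes multiplication continuous; morphisms are continuous unital algebra homomorphisms. For such $A$, $[A]$ denotes the topological Lie algebra with the same underlying topological vector space and bracket $[x,y]=xy-yx$. For a topological $\mathbb K$-Lie algebra $\mathfrak g$ let $\mathcal I(\mathfrak g)$ be the set of closed ideals $I$ of $\mathfrak g$ with $\dim \mathfrak g/I<\infty$; $\mathfrak g$ is profinite-dimensional if the natural map $\mathfrak g\to\lim_{I\in\mathcal I(\mathfrak g)}\mathfrak g/I$ is an isomorphism of topological Lie algebras. The weakly complete enveloping algebra of a profinite-dimensional Lie algebra $\mathfrak g$ is a weakly complete unital algebra $\mathbf U(\mathfrak g)$ together with a continuous Lie algebra morphism $\lambda_{\mathfrak g}\colon\mathfrak g\to[\mathbf U(\mathfrak g)]$ such that for every weakly complete unital algebra $A$ and every continuous Lie algebra morphism $f\colon\mathfrak g\to[A]$ there is a unique continuous unital algebra morphism $f'\colon\mathbf U(\mathfrak g)\to A$ with $f=f'\circ\lambda_{\mathfrak g}$ (it exists and is unique up to unique isomorphism). *)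

(* Defs.v *)
From HB Require Import structures.
From mathcomp Require Import all_boot all_order all_algebra.
From mathcomp Require Import all_classical all_reals all_analysis.
From mathcomp Require Export complex.
Export numFieldNormedType.Exports.

Set Implicit Arguments.
Unset Strict Implicit.
Unset Printing Implicit Defensive.

Import Order.TTheory GRing.Theory Num.Theory.
Local Open Scope classical_set_scope.
Local Open Scope ring_scope.

(* A unital associative K-algebra carrying a topology (no axioms linking   *)
(* the two yet; these are imposed by [wc_alg] below).                      *)
#[short(type="topAlgType")]
HB.structure Definition TopAlgebra (K : numDomainType) :=
  {A of Topological A & GRing.Algebra K A}.

Section Defs.
Context {K : numFieldType}.

(* [A] is isomorphic, as a topological K-vector space, to the power K^J   *)
(* with the product topology ({ptws J -> K} is the product topology).     *)
Definition wc_space_over (J : Type) (A : topAlgType K) : Prop :=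
  exists (phi : A -> {ptws J -> K}) (psi : {ptws J -> K} -> A),
    [/\ (forall (a : K) (x y : A) (j : J), phi (a *: x + y) j = a * phi x j + phi y j),
        cancel phi psi, cancel psi phi, continuous phi & continuous psi].

Definition weakly_complete (A : topAlgType K) : Prop :=
  exists J : Type, wc_space_over J A.

Definition wc_alg (A : topAlgType K) : Prop :=
  weakly_complete A /\ continuous (fun p : A * A => p.1 * p.2).

(* finite-dimensional unital associative algebra with its (unique Hausdorff *)
(* vector space) topology, i.e. isomorphic to K^n as a topological vector   *)
(* space; multiplication is then automatically continuous.                  *)
Definition fd_alg (A : topAlgType K) : Prop :=
  (exists n : nat, wc_space_over 'I_n A) /\
  continuous (fun p : A * A => p.1 * p.2).

Definition cont_alg_morph (A B : topAlgType K) (f : A -> B) : Prop :=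
  [/\ (forall (a : K) (x y : A), f (a *: x + y) = a *: f x + f y),
      (forall x y : A, f (x * y) = f x * f y),
      f 1 = 1 & continuous f].

Definition is_top_lie (g : topologicalLmodType K) (br : g -> g -> g) : Prop :=
  [/\ (forall (a : K) (x y z : g), br (a *: x + y) z = a *: br x z + br y z),
      (forall (a : K) (x y z : g), br x (a *: y + z) = a *: br x y + br x z),
      (forall x : g, br x x = 0),
      (forall x y z : g, br x (br y z) + br y (br z x) + br z (br x y) = 0) &
      continuous (fun p : g * g => br p.1 p.2)].

Definition cont_lie_morph (g : topologicalLmodType K) (br : g -> g -> g)
    (A : topAlgType K) (f : g -> A) : Prop :=
  [/\ (forall (a : K) (x y : g), f (a *: x + y) = a *: f x + f y),
      (forall x y : g, f (br x y) = f x * f y - f y * f x) &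
      continuous f].

(* I in I(g): closed ideal with dim g/I < oo (g/I spanned by finitely many *)
(* cosets)                                                                 *)
Definition cofinite_closed_ideal (g : topologicalLmodType K)
    (br : g -> g -> g) (I : set g) : Prop :=
  [/\ I 0,
      (forall (a : K) (x y : g), I x -> I y -> I (a *: x + y)),
      (forall x y : g, I y -> I (br x y)),
      closed I &
      exists (n : nat) (v : 'I_n -> g),
        forall x : g, exists c : 'I_n -> K, I (x - \sum_(i < n) c i *: v i)].

Definition ideals_fc (g : topologicalLmodType K) (br : g -> g -> g) :=
  {I : set g | cofinite_closed_ideal br I}.

Definition coset (g : topologicalLmodType K) (I : set g) (x : g) : set g :=
  [set y | I (y - x)].

(* the projective limit lim_{I in I(g)} g/I, as the set of compatible      *)
(* families of cosets (c_I)_I, inside the product of the g/I               *)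
Definition lim_quot (g : topologicalLmodType K) (br : g -> g -> g) :
    set (ideals_fc br -> set g) :=
  [set c | (forall I : ideals_fc br, exists x : g, c I = coset (sval I) x) /\
           (forall I I' : ideals_fc br, sval I `<=` sval I' -> c I `<=` c I')].

Definition lim_nat (g : topologicalLmodType K) (br : g -> g -> g) (x : g) :
    ideals_fc br -> set g :=
  fun I => coset (sval I) x.

(* open subsets of g/I for the quotient topology: sets of cosets whose     *)
(* union is open in g                                                      *)
Definition quot_open (g : topologicalLmodType K) (I : set g)
    (V : set (set g)) : Prop :=
  (forall S, V S -> exists x : g, S = coset I x) /\
  open (\bigcup_(S in V) S).

(* subbase of the product topology on the family of the g/I: cylinders *)
Definition lim_cylinders (g : topologicalLmodType K) (br : g -> g -> g) :
    set (set (ideals_fc br -> set g)) :=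
  [set C | exists (I : ideals_fc br) (V : set (set g)),
             quot_open (sval I) V /\ C = [set c | V (c I)]].

Definition gen_open (X : Type) (B : set (set X)) (W : set X) : Prop :=
  forall x, W x -> exists s : seq (set X),
    [/\ (forall C, C \in s -> B C),
        (forall C, C \in s -> C x) &
        (forall y, (forall C, C \in s -> C y) -> W y)].

(* g is profinite-dimensional: the natural map g -> lim g/I is a bijection *)
(* onto the limit which is a homeomorphism for the limit (= subspace of    *)
(* product) topology.  (It is automatically a Lie algebra morphism for the *)
(* componentwise Lie structure of the limit, so this is exactly: is an       *)
(* isomorphism of topological Lie algebras.)                                *)
Definition profinite_dim (g : topologicalLmodType K) (br : g -> g -> g) : Prop :=
  [/\ injective (@lim_nat g br),
      range (@lim_nat g br) = @lim_quot g br,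
      (forall W, gen_open (@lim_cylinders g br) W -> open (@lim_nat g br @^-1` W)) &
      (forall U : set g, open U -> exists W,
          gen_open (@lim_cylinders g br) W /\ @lim_nat g br @` U = W `&` @lim_quot g br)].

Definition is_wc_envelope (g : topologicalLmodType K) (br : g -> g -> g)
    (U : topAlgType K) (lam : g -> U) : Prop :=
  [/\ wc_alg U, cont_lie_morph br lam &
      forall (A : topAlgType K), wc_alg A ->
      forall f : g -> A, cont_lie_morph br f ->
        exists! f' : U -> A, cont_alg_morph f' /\ f = f' \o lam].

End Defs.

Arguments lim_quot {K g} br _.
Arguments lim_nat {K g} br x _.
Arguments lim_cylinders {K g} br _.
Arguments is_wc_envelope {K g} br U lam.

(* Main.v *)
Require Import Defs.
From HB Require Import structures.
From mathcomp Require Import all_boot all_order all_algebra.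
From mathcomp Require Import all_classical all_reals all_analysis.
From mathcomp Require Import complex.
From Stdlib Require List.
From mathcomp Require Import ring.
Import numFieldNormedType.Exports.
Set Implicit Arguments.
Unset Strict Implicit.
Unset Printing Implicit Defensive.
Import Order.TTheory GRing.Theory Num.Theory.
Local Open Scope classical_set_scope.
Local Open Scope ring_scope.


Section Topo.
Variable K : numFieldType.

Lemma eval_cont (J : Type) (j : J) : continuous (fun g : {ptws J -> K} => g j).
Proof.
move=> g.
have H := @cvg_sup (J -> K) J
  (fun i => Topological.class (initial_topology (fun f : J -> K => f i)))
  (nbhs (g : {ptws J -> K})) g (nbhs_filter g).
have H1 : nbhs (g : {ptws J -> K}) --> (g : {ptws J -> K}) by exact: cvg_id.
have H2 := H.1 H1 j.
exact: (cvg_trans (cvg_app (fun f : J -> K => f j) H2) (@initial_continuous (J -> K) K (fun f => f j) g)).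
Qed.
Lemma ptws_cont (T : topologicalType) (J : Type) (h : T -> {ptws J -> K}) :
  (forall j, continuous (fun x => h x j)) -> continuous h.
Proof.
move=> hc x.
have H := @cvg_sup (J -> K) J
  (fun i => Topological.class (initial_topology (fun f : J -> K => f i)))
  (h @ nbhs x) (h x) (fmap_filter _ (nbhs_filter x)).
apply: H.2 => i A /= [_ [[B Bop <-] Bfs sBfA]].
have : \forall y \near x, B (h y i) by apply: hc; exact: open_nbhs_nbhs.
by apply: filterS => y Hy; apply: sBfA.
Qed.
Lemma sum_cont (T : topologicalType) (I : Type) (r : seq I) (f : I -> T -> K) :
  (forall i, continuous (f i)) -> continuous (fun x => \sum_(i <- r) f i x).
Proof.
move=> fc; elim: r => [|i r IH] x.
  under eq_fun do rewrite big_nil; exact: cvg_cst.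
under eq_fun do rewrite big_cons.
exact: (cvgD (fc i x) (IH x)).
Qed.

Lemma mul_cont (T : topologicalType) (f g : T -> K) :
  continuous f -> continuous g -> continuous (fun x => f x * g x).
Proof. by move=> fc gc x; exact: (cvgM (fc x) (gc x)). Qed.

Lemma entry_cont (m n : nat) (i : 'I_m) (j : 'I_n) :
  continuous (fun M : 'M[K]_(m, n) => M i j).
Proof.
move=> M B /= BM.
exists (fun i' j' => if (i' == i) && (j' == j) then B else setT).
  by move=> i' j'; case: ifP => [/andP[/eqP-> /eqP->]//|_]; exact: filterT.
by move=> N /(_ i j); rewrite !eqxx.
Qed.

Lemma mx_cont (T : topologicalType) (m n : nat) (h : T -> 'M[K]_(m, n)) :
  (forall i j, continuous (fun x => h x i j)) -> continuous h.
Proof.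
move=> hc x A [P Pn PA].
have : \forall y \near x, forall i, forall j, P i j (h y i j).
  apply: filter_forall => i; apply: filter_forall => j.
  exact: (hc i j x _ (Pn i j)).
by apply: filterS => y Hy; apply: PA.
Qed.

Lemma comp_cont (T U W : topologicalType) (f : T -> U) (g : U -> W) :
  continuous f -> continuous g -> continuous (g \o f).
Proof. by move=> fc gc x; apply: continuous_comp; [exact: fc|exact: gc]. Qed.

Lemma pair_cont (T U W : topologicalType) (f : T -> U) (h : T -> W) :
  continuous f -> continuous h -> continuous (fun x => (f x, h x)).
Proof. by move=> fc hc x; apply: cvg_pair; [exact: fc|exact: hc]. Qed.

Lemma fst_cont (T U : topologicalType) : continuous (@fst T U).
Proof. by move=> [x y]; exact: cvg_fst. Qed.
Lemma snd_cont (T U : topologicalType) : continuous (@snd T U).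
Proof. by move=> [x y]; exact: cvg_snd. Qed.

Lemma lin_sum (V W : lmodType K) (L : V -> W) (I : Type) (r : seq I) (F : I -> V) :
  (forall a M N, L (a *: M + N) = a *: L M + L N) ->
  L (\sum_(i <- r) F i) = \sum_(i <- r) L (F i).
Proof.
move=> Ll.
have L0 : L 0 = 0.
  have H := Ll 1 0 0; rewrite !scale1r addr0 in H.
  by move/(congr1 (fun t => t - L 0)): H; rewrite addrK subrr => ->.
elim: r => [|i r IH]; first by rewrite !big_nil L0.
rewrite !big_cons -IH.
by have := Ll 1 (F i) (\sum_(j <- r) F j); rewrite !scale1r.
Qed.

Lemma lin_scale (V W : lmodType K) (L : V -> W) a M :
  (forall a M N, L (a *: M + N) = a *: L M + L N) -> L (a *: M) = a *: L M.
Proof.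
move=> Ll.
have L0 : L 0 = 0.
  have H := Ll 1 0 0; rewrite !scale1r addr0 in H.
  by move/(congr1 (fun t => t - L 0)): H; rewrite addrK subrr => ->.
by rewrite -[a *: M]addr0 Ll L0 addr0.
Qed.

Lemma linmxK_cont (m n : nat) (L : 'M[K]_(m, n) -> K^o) :
  (forall a M N, L (a *: M + N) = a *: L M + L N) -> continuous L.
Proof.
move=> Ll.
have -> : L = fun M => \sum_(i < m) \sum_(j < n) M i j * L (delta_mx i j).
  apply: funext => M; rewrite {1}(matrix_sum_delta M) lin_sum //.
  by apply: eq_bigr => i _; rewrite lin_sum //; apply: eq_bigr => j _; rewrite lin_scale.
apply: sum_cont => i; apply: sum_cont => j.
apply: mul_cont; [exact: entry_cont|exact: cst_continuous].
Qed.

Lemma linmxmx_cont (m n p q : nat) (L : 'M[K]_(m, n) -> 'M[K]_(p, q)) :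
  (forall a M N, L (a *: M + N) = a *: L M + L N) -> continuous L.
Proof.
move=> Ll; apply: mx_cont => k l.
apply: (@linmxK_cont m n (fun M => L M k l)) => a M N.
by rewrite Ll !mxE.
Qed.
End Topo.

Section MXS.
Variable K : numFieldType.
Definition MX (N : nat) := 'M[K]_N.+1.
HB.instance Definition _ (N : nat) := Topological.on (MX N).
HB.instance Definition _ (N : nat) := GRing.Algebra.on (MX N).

Lemma MX_mulE N (M1 M2 : MX N) : M1 * M2 = (M1 : 'M[K]_N.+1) *m M2.
Proof. by []. Qed.

Lemma MX_mul_cont N : continuous (fun p : MX N * MX N => p.1 * p.2).
Proof.
apply: mx_cont => i j.
under eq_fun do rewrite MX_mulE mxE.
apply: sum_cont => k; apply: mul_cont.
  exact: (comp_cont (@fst_cont _ _) (@entry_cont K _ _ i k)).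
exact: (comp_cont (@snd_cont _ _) (@entry_cont K _ _ k j)).
Qed.

Lemma MX_fd N : fd_alg (MX N).
Proof.
split; last exact: MX_mul_cont.
exists #|{: 'I_N.+1 * 'I_N.+1}|.
pose phi (M : MX N) : {ptws 'I_#|{: 'I_N.+1 * 'I_N.+1}| -> K} :=
  fun k => M (enum_val k).1 (enum_val k).2.
pose psi (g : {ptws 'I_#|{: 'I_N.+1 * 'I_N.+1}| -> K}) : MX N :=
  \matrix_(i, j) g (enum_rank (i, j)).
exists phi, psi; split.
- by move=> a x y j; rewrite /phi !mxE.
- by move=> M; apply/matrixP => i j; rewrite /psi /phi mxE enum_rankK.
- by move=> g; apply: funext => k; rewrite /psi /phi mxE -surjective_pairing enum_valK.
- apply: ptws_cont => k; exact: entry_cont.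
- apply: mx_cont => i j.
  have E : (fun g => psi g i j) = (fun g : {ptws _ -> K} => g (enum_rank (i, j))).
    by apply: funext => g; rewrite /psi mxE.
  rewrite E; exact: eval_cont.
Qed.
End MXS.

Section Univ.
Variables (K : numFieldType) (g : topologicalLmodType K) (br : g -> g -> g).
Variables (V : topAlgType K) (nu : g -> V).
Hypothesis nuL : cont_lie_morph br nu.
Hypothesis Hfd : forall (F : topAlgType K), fd_alg F ->
     forall f : g -> F, cont_lie_morph br f ->
       exists! f' : V -> F, cont_alg_morph f' /\ f = f' \o nu.

Lemma comp_alg (A B C : topAlgType K) (f : A -> B) (h : B -> C) :
  cont_alg_morph f -> cont_alg_morph h -> cont_alg_morph (h \o f).
Proof.
move=> [f1 f2 f3 f4] [h1 h2 h3 h4]; split => /=.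
- by move=> a x y; rewrite f1 h1.
- by move=> x y; rewrite f2 h2.
- by rewrite f3 h3.
- exact: comp_cont.
Qed.

Lemma comp_lie_alg (A B : topAlgType K) (f : g -> A) (h : A -> B) :
  cont_lie_morph br f -> cont_alg_morph h -> cont_lie_morph br (h \o f).
Proof.
move=> [f1 f2 f3] [h1 h2 h3 h4]; split => /=.
- by move=> a x y; rewrite f1 h1.
- move=> x y; rewrite f2 -!h2.
  have hN : forall z, h (- z) = - h z.
    move=> z; have := h1 (-1) z 0; rewrite addr0 scaleN1r.
    have h0 : h 0 = 0.
      have := h1 1 0 0; rewrite !scale1r addr0.
      by move/(congr1 (fun t => t - h 0)); rewrite addrK subrr => ->.
    by rewrite h0 addr0 scaleN1r.
  by have := h1 1 (f x * f y) (- (f y * f x)); rewrite !scale1r hN.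
- exact: comp_cont.
Qed.

Lemma id_alg (A : topAlgType K) : cont_alg_morph (@id A).
Proof. by split => // x; exact: cvg_id. Qed.

Lemma uniqF (F : topAlgType K) (h1 h2 : V -> F) : fd_alg F ->
  cont_alg_morph h1 -> cont_alg_morph h2 -> h1 \o nu = h2 \o nu -> h1 = h2.
Proof.
move=> fdF a1 a2 e.
have [f' [_ U]] := Hfd fdF (comp_lie_alg nuL a1).
by rewrite -(U h1) ?(U h2) //; split.
Qed.

Lemma h0_of (A B : lmodType K) (h : A -> B) :
  (forall a x y, h (a *: x + y) = a *: h x + h y) -> h 0 = 0.
Proof.
move=> h1; have := h1 1 0 0; rewrite !scale1r addr0.
by move/(congr1 (fun t => t - h 0)); rewrite addrK subrr => ->.
Qed.

Lemma commute_lift N (h : V -> MX K N) (X : 'M[K]_N.+1) :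
  cont_alg_morph h -> (forall x, X *m h (nu x) = h (nu x) *m X) ->
  forall v, X *m h v = h v *m X.
Proof.
move=> ha hX.
pose D (M : 'M[K]_N.+1) : 'M[K]_(N.+1 + N.+1) := block_mx M 0 0 M.
pose U : 'M[K]_(N.+1 + N.+1) := block_mx 1%:M X 0 1%:M.
pose Ui : 'M[K]_(N.+1 + N.+1) := block_mx 1%:M (-X) 0 1%:M.
have UUi : U *m Ui = 1%:M.
  by rewrite mulmx_block !mul1mx !mul0mx !mulmx0 !mulmx1 !addr0 add0r addNr -scalar_mx_block.
have UiU : Ui *m U = 1%:M.
  by rewrite mulmx_block !mul1mx !mul0mx !mulmx0 !mulmx1 !addr0 add0r subrr -scalar_mx_block.
have Dc : continuous D.
  apply: linmxmx_cont => a M1 M2.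
  by rewrite /D scale_block_mx add_block_mx !scaler0 !addr0.
have Dl : forall a M1 M2, D (a *: M1 + M2) = a *: D M1 + D M2.
  by move=> a M1 M2; rewrite /D scale_block_mx add_block_mx !scaler0 !addr0.
have Dm : forall M1 M2, D (M1 *m M2) = D M1 *m D M2.
  by move=> M1 M2; rewrite /D mulmx_block !mulmx0 !mul0mx !addr0 add0r.
have D1 : D 1%:M = 1%:M by rewrite /D -scalar_mx_block.
case: ha => h1 h2 h3 h4.
have a1 : cont_alg_morph (fun v => (D (h v) : MX K (N + N.+1))).
  split => //=.
  - by move=> a x y; rewrite h1 Dl.
  - by move=> x y; rewrite h2 Dm.
  - by rewrite h3 D1.
  - exact: (comp_cont h4 Dc).
have a2 : cont_alg_morph (fun v => (U *m D (h v) *m Ui : MX K (N + N.+1))).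
  split => //=.
  - by move=> a x y; rewrite h1 Dl mulmxDr mulmxDl -!scalemxAr -!scalemxAl.
  - move=> x y; rewrite h2 Dm.
    change (U *m (D (h x) *m D (h y)) *m Ui = (U *m D (h x) *m Ui) *m (U *m D (h y) *m Ui)).
    by rewrite -!mulmxA (mulmxA Ui U) UiU mul1mx.
  - by rewrite h3 D1 mulmx1 UUi.
  - have c : continuous (fun M : 'M[K]_N.+1 => U *m D M *m Ui).
      apply: linmxmx_cont => a M1 M2.
      by rewrite Dl mulmxDr mulmxDl -!scalemxAr -!scalemxAl.
    exact: (comp_cont h4 c).
have E := uniqF (MX_fd K (N + N.+1)) a1 a2.
have key : forall M, U *m D M *m Ui = block_mx M (X *m M - M *m X) 0 M.
  move=> M; rewrite /U /D /Ui !mulmx_block !mul1mx !mul0mx !mulmx0 !mulmx1.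
  by rewrite !addr0 !add0r mulmxN mul0mx add0r addrC.
have Hnu : (fun v => (D (h v) : MX K (N + N.+1))) \o nu =
           (fun v => (U *m D (h v) *m Ui : MX K (N + N.+1))) \o nu.
  by apply: funext => x /=; rewrite key (hX x) subrr.
move=> v; have E2 := congr1 (fun f => f v) (E Hnu).
have E3 : D (h v) = U *m D (h v) *m Ui := E2.
rewrite key /D in E3; have [_ H _ _] := eq_block_mx E3.
by apply/eqP; rewrite -subr_eq0 -H.
Qed.

Definition mxof m n (f : 'rV[K]_m -> 'rV[K]_n) : 'M[K]_(m, n) :=
  \matrix_(i, j) f (delta_mx 0 i) 0 j.

Lemma mxofE m n (f : 'rV[K]_m -> 'rV[K]_n) u :
  (forall a x y, f (a *: x + y) = a *: f x + f y) -> u *m mxof f = f u.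
Proof.
move=> fl; apply/rowP => j; rewrite !mxE.
rewrite [in RHS](row_sum_delta u) lin_sum // summxE.
by apply: eq_bigr => i _; rewrite lin_scale // !mxE.
Qed.

Lemma mx_ext m n (M1 M2 : 'M[K]_(m, n)) :
  (forall u : 'rV_m, u *m M1 = u *m M2) -> M1 = M2.
Proof. by move=> H; apply/row_matrixP => i; rewrite !rowE H. Qed.

Section Rep.
Variable A : topAlgType K.
Hypothesis mulc : continuous (fun p : A * A => p.1 * p.2).
Variable f : g -> A.
Hypothesis fL : cont_lie_morph br f.

Definition goodG n (G : A -> 'rV[K]_n) (d : V -> A) :=
  [/\ (forall a x y, d (a *: x + y) = a *: d x + d y),
      (forall v w, G (d (v * w)) = G (d v * d w)),
      G (d 1) = G 1,
      (forall x, G (d (nu x)) = G (f x)) &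
      continuous (fun v => G (d v))].

Variables (m : nat) (G : A -> 'rV[K]_m.+1) (P : 'rV[K]_m.+1 -> A).
Hypothesis Gl : forall a x y, G (a *: x + y) = a *: G x + G y.
Hypothesis Pl : forall a x y, P (a *: x + y) = a *: P x + P y.
Hypothesis GP : forall u, G (P u) = u.
Hypothesis Gid : forall a x, G a = 0 -> G (x * a) = 0 /\ G (a * x) = 0.
Hypothesis Gc : continuous G.

Lemma GB x y : G (x - y) = G x - G y.
Proof. by rewrite addrC -scaleN1r Gl scaleN1r addrC. Qed.

Lemma Geq_mul a a' x : G a = G a' -> G (x * a) = G (x * a') /\ G (a * x) = G (a' * x).
Proof.
move=> e; have /(Gid x) [h1 h2] : G (a - a') = 0 by rewrite GB e subrr.
split; apply/eqP; rewrite -subr_eq0 -GB; apply/eqP.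
  by rewrite -mulrBr.
by rewrite -mulrBl.
Qed.

Definition rhoR (b : A) : MX K m := mxof (fun u => G (P u * b)).
Definition lamR (c : A) : MX K m := mxof (fun u => G (c * P u)).

Lemma rhoR_lin b u : u *m rhoR b = G (P u * b).
Proof. by apply: mxofE => a x y; rewrite Pl mulrDl -scalerAl Gl. Qed.
Lemma lamR_lin c u : u *m lamR c = G (c * P u).
Proof. by apply: mxofE => a x y; rewrite Pl mulrDr -scalerAr Gl. Qed.

Lemma GrhoR a b : G a *m rhoR b = G (a * b).
Proof. by rewrite rhoR_lin; case: (Geq_mul b (GP (G a))). Qed.
Lemma GlamR a c : G a *m lamR c = G (c * a).
Proof. by rewrite lamR_lin; case: (Geq_mul c (GP (G a))). Qed.

Lemma rhoR_alg : cont_alg_morph rhoR.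
Proof.
split.
- move=> a x y; apply: mx_ext => u.
  by rewrite mulmxDr -scalemxAr !rhoR_lin mulrDr -scalerAr Gl.
- move=> x y; apply: mx_ext => u; rewrite MX_mulE mulmxA.
  by rewrite -[u]GP !GrhoR mulrA.
- apply: mx_ext => u; rewrite -[u]GP GrhoR mulr1.
  by change (G (P u) = G (P u) *m 1%:M); rewrite mulmx1.
- apply: mx_cont => i j.
  have -> : (fun b => rhoR b i j) = (fun b => G (P (delta_mx 0 i) * b) 0 j).
    by apply: funext => b; rewrite /rhoR /mxof mxE.
  apply: (comp_cont _ (@entry_cont K _ _ 0 j)).
  apply: (comp_cont _ Gc).
  have pc : continuous (fun x : A => (P (delta_mx 0 i), x)).
    by apply: pair_cont; [exact: cst_continuous|move=> x; exact: cvg_id].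
  exact: (comp_cont pc mulc).
Qed.

Lemma lamR_comm b c : lamR c * rhoR b = rhoR b * lamR c.
Proof.
apply: mx_ext => u; rewrite !MX_mulE !mulmxA.
by rewrite -[u]GP GlamR GrhoR GrhoR GlamR mulrA.
Qed.

Lemma rhoR_eq a a' : G a = G a' -> rhoR a = rhoR a'.
Proof. by move=> e; apply: mx_ext => u; rewrite !rhoR_lin; case: (Geq_mul (P u) e). Qed.

Lemma rep_main : exists c : V -> A, goodG G c /\
  forall d, goodG G d -> forall v, G (d v) = G (c v).
Proof.
have rf : cont_lie_morph br (rhoR \o f) := comp_lie_alg fL rhoR_alg.
have [h [[ha hf] hU]] := Hfd (MX_fd K m) rf.
have hnu : forall x, h (nu x) = rhoR (f x).
  by move=> x; have := congr1 (fun F => F x) hf => /= ->.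
have hcomm : forall c v, (lamR c : 'M[K]_m.+1) *m h v = (h v : 'M[K]_m.+1) *m lamR c.
  move=> c; apply: commute_lift => // x; rewrite hnu.
  exact: (lamR_comm (f x) c).
case: (ha) => h1 h2 h3 h4.
pose c v := P (G 1 *m h v).
have Gc0 : forall v, G (c v) = G 1 *m h v by move=> v; rewrite GP.
have G1l : forall a, G 1 *m lamR a = G a by move=> a; rewrite GlamR mulr1.
have key : forall a v, G a *m h v = G (a * c v).
  by move=> a v; rewrite -G1l -mulmxA hcomm mulmxA -Gc0 GlamR.
exists c; split.
- split.
  + by move=> a x y; rewrite /c h1 mulmxDr -scalemxAr Pl.
  + by move=> v w; rewrite Gc0 h2 MX_mulE mulmxA -Gc0 key.
  + by rewrite Gc0 h3; change (G 1 *m 1%:M = G 1); rewrite mulmx1.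
  + by move=> x; rewrite Gc0 hnu GrhoR mul1r.
  + have -> : (fun v => G (c v)) = (fun v => G 1 *m (h v : 'M[K]_m.+1)).
      by apply: funext => v; exact: Gc0.
    apply: (comp_cont h4); apply: linmxmx_cont => a M1 M2.
    by rewrite mulmxDr -scalemxAr.
- move=> d [d1 d2 d3 d4 d5] v.
  have Pa : cont_alg_morph (fun v => rhoR (d v)).
    case: rhoR_alg => r1 r2 r3 r4; split.
    + by move=> a x y; rewrite d1 r1.
    + by move=> x y; rewrite -r2; apply: rhoR_eq.
    + by rewrite (rhoR_eq d3) r3.
    + have -> : (fun v => rhoR (d v)) = (fun v => rhoR (P (G (d v)))).
        by apply: funext => w; apply: rhoR_eq; rewrite GP.
      have lc : continuous (fun u : 'rV[K]_m.+1 => (rhoR (P u) : 'M[K]_m.+1)).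
        apply: linmxmx_cont => a x y.
        by case: rhoR_alg => r1' _ _ _; rewrite Pl r1'.
      exact: (comp_cont d5 lc).
  have E : (fun v => rhoR (d v)) = h.
    apply: (uniqF (MX_fd K m) Pa ha); apply: funext => x /=.
    by rewrite hnu; apply: rhoR_eq.
  rewrite Gc0 -(congr1 (fun F => F v) E) /=.
  by rewrite GrhoR mul1r.
Qed.
End Rep.

Lemma rep_any (A : topAlgType K) (mulc : continuous (fun p : A * A => p.1 * p.2))
  (f : g -> A) (fL : cont_lie_morph br f) n (G : A -> 'rV[K]_n) (P : 'rV[K]_n -> A) :
  (forall a x y, G (a *: x + y) = a *: G x + G y) ->
  (forall a x y, P (a *: x + y) = a *: P x + P y) ->
  (forall u, G (P u) = u) ->
  (forall a x, G a = 0 -> G (x * a) = 0 /\ G (a * x) = 0) ->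
  continuous G ->
  exists c : V -> A, goodG f G c /\
    forall d, goodG f G d -> forall v, G (d v) = G (c v).
Proof.
case: n G P => [|m] G P Gl Pl GP Gid Gc; last exact: rep_main.
exists (fun _ => 0); split; last by move=> d _ v; rewrite !thinmx0.
split => //.
- by move=> a x y; rewrite scaler0 addr0.
- by move=> v w; rewrite !thinmx0.
- by rewrite !thinmx0.
- by move=> x; rewrite !thinmx0.
- exact: cst_continuous.
Qed.
End Univ.

Section Box.
Variable K : numFieldType.
Definition boxF (J : Type) : set_system {ptws J -> K} :=
  [set U | exists (L : seq (J * K)), (forall p, List.In p L -> 0 < p.2) /\
     forall g : J -> K, (forall p, List.In p L -> `|g p.1| < p.2) -> U g].

Lemma boxF_filter J : Filter (@boxF J).
Proof.
constructor.
- by exists [::]; split => // g _.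
- move=> P Q [L1 [p1 H1]] [L2 [p2 H2]].
  exists (L1 ++ L2); split.
    by move=> p Hp; case: (List.in_app_or _ _ _ Hp); [exact: p1|exact: p2].
  move=> g Hg; split.
    by apply: H1 => p Hp; apply: Hg; apply: List.in_or_app; left.
  by apply: H2 => p Hp; apply: Hg; apply: List.in_or_app; right.
- by move=> P Q PQ [L [p H]]; exists L; split => // g /H; exact: PQ.
Qed.

Lemma ptws_box (J : Type) (U : set {ptws J -> K}) :
  nbhs (0 : {ptws J -> K}) U ->
  exists (L : seq (J * K)), (forall p, List.In p L -> 0 < p.2) /\
     forall g : J -> K, (forall p, List.In p L -> `|g p.1| < p.2) -> U g.
Proof.
have H := @cvg_sup (J -> K) J
  (fun i => Topological.class (initial_topology (fun f : J -> K => f i)))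
  (@boxF J) (0 : {ptws J -> K}) (@boxF_filter J).
suff : @boxF J --> (0 : {ptws J -> K}) by move=> /(_ U) Hc /Hc.
apply: H.2 => i A /= [_ [[B Bop <-] Bfs sBfA]].
have : nbhs (0 : K) B by apply: open_nbhs_nbhs; split.
move=> /nbhs_ballP [e ep eB].
exists [:: (i, e)]; split; first by move=> p [<-|].
move=> g Hg; apply: sBfA; apply: eB.
by rewrite /ball /= sub0r normrN; apply: (Hg (i, e)); left.
Qed.
End Box.

Section WC.
Variable K : numFieldType.
Variables (A : topAlgType K) (J : Type) (phi : A -> {ptws J -> K}) (psi : {ptws J -> K} -> A).
Hypothesis phil : forall (a : K) (x y : A) (j : J), phi (a *: x + y) j = a * phi x j + phi y j.
Hypothesis phiK : cancel phi psi.
Hypothesis psiK : cancel psi phi.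
Hypothesis phic : continuous phi.
Hypothesis psic : continuous psi.
Hypothesis mulc : continuous (fun p : A * A => p.1 * p.2).

Lemma phi0 j : phi 0 j = 0.
Proof.
have := phil 1 0 0 j; rewrite scale1r addr0 mul1r.
by move/(congr1 (fun t => t - phi 0 j)); rewrite addrK subrr => ->.
Qed.

Lemma phiZ a x j : phi (a *: x) j = a * phi x j.
Proof. by rewrite -[a *: x]addr0 phil phi0 addr0. Qed.

Lemma phiD x y j : phi (x + y) j = phi x j + phi y j.
Proof. by rewrite -[x]scale1r phil mul1r scale1r. Qed.

Lemma phiB x y j : phi (x - y) j = phi x j - phi y j.
Proof. by rewrite phiD -scaleN1r phiZ mulN1r. Qed.

Lemma phi_inj x y : (forall j, phi x j = phi y j) -> x = y.
Proof. by move=> H; rewrite -(phiK x) -(phiK y); congr psi; apply: funext. Qed.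

Lemma psi0 : psi (fun _ => 0) = 0.
Proof. by apply: phi_inj => j; rewrite psiK phi0. Qed.

Lemma scal_cont (x : A) : continuous (fun t : K => t *: x).
Proof.
have -> : (fun t : K => t *: x) = psi \o (fun t => (fun k => t * phi x k) : {ptws J -> K}).
  by apply: funext => t /=; apply: phi_inj => j; rewrite psiK phiZ.
apply: (comp_cont _ psic); apply: ptws_cont => k.
by apply: mul_cont; [move=> t; exact: cvg_id|exact: cst_continuous].
Qed.

Lemma fin_supp j : exists F : seq J, forall z,
  (forall k, List.In k F -> phi z k = 0) -> forall x y, phi (x * z * y) j = 0.
Proof.
pose T3 := fun p : (A * A) * A => phi (p.1.1 * p.1.2 * p.2) j.
have T3c : continuous T3.
  have c1 : continuous (fun p : (A * A) * A => (p.1.1 * p.1.2, p.2)).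
    apply: pair_cont; last exact: snd_cont.
    exact: (comp_cont (@fst_cont _ _) mulc).
  exact: (comp_cont (comp_cont (comp_cont c1 mulc) phic) (@eval_cont K J j)).
have T30 : T3 ((0, 0), 0) = 0 by rewrite /T3 /= !mul0r phi0.
have := T3c ((0, 0), 0) (ball (T3 ((0,0),0)) 1) (nbhsx_ballx _ _ ltr01).
rewrite T30 => -[[W12 W3] /= [nW12 nW3] sW].
move: nW12 => [[W1 W2] /= [nW1 nW2] sW12].
have nW2' : nbhs (0 : {ptws J -> K}) (psi @^-1` W2).
  have e0 : psi 0 = 0 by exact: psi0.
  have H : nbhs (psi (0 : {ptws J -> K})) W2 by rewrite e0.
  exact: (psic H).
have [L [Lp LW]] := ptws_box nW2'.
exists (map fst L) => z zF x y.
have zW : forall s : K, W2 (s *: z).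
  move=> s; rewrite -(phiK (s *: z)); apply: LW => p Hp.
  rewrite phiZ zF ?mulr0 ?normr0; first exact: Lp.
  by apply: List.in_map.
have : \forall t \near (0 : K), W1 (t *: x) /\ W3 (t *: y).
  apply: filterI.
    have H : nbhs ((0 : K) *: x) W1 by rewrite scale0r.
    exact: (scal_cont H).
  have H : nbhs ((0 : K) *: y) W3 by rewrite scale0r.
  exact: (scal_cont H).
move=> /nbhs_dnbhs Ht.
have [t [[Wx Wy] t0]] := filter_ex (filterI Ht (nbhs_dnbhs_neq (0 : K))).
apply/eqP; apply/negPn/negP => c0.
set c := phi (x * z * y) j in c0.
set s := (t ^+ 2 * c)^-1.
have := sW ((t *: x, s *: z), t *: y) (conj (sW12 (_, _) (conj Wx (zW _))) Wy).
have E : t *: x * (s *: z) * (t *: y) = (t * s * t) *: (x * z * y).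
  rewrite -!scalerAl -!scalerAr -?scalerAl -?scalerAr -?scalerAl !scalerA.
  by congr (_ *: _); rewrite /GRing.scale /=; ring.
rewrite /ball /= sub0r normrN /T3 /= E phiZ -/c.
have -> : t * s * t * c = 1.
  have -> : t * s * t * c = (t ^+ 2 * c) * s by rewrite expr2; ring.
  by rewrite /s mulfV // mulf_neq0 // expf_neq0.
by rewrite normr1 ltxx.
Qed.
End WC.


Lemma In_mem (T : eqType) (x : T) (s : seq T) : List.In x s <-> x \in s.
Proof.
elim: s => [|y s IH] //=; rewrite in_cons; split.
  by case=> [->|/IH ->]; rewrite ?eqxx ?orbT.
by case/orP => [/eqP ->|/IH]; [left|right].
Qed.

Section Datum.
Variable K : numFieldType.
Variables (A : topAlgType K) (J : Type) (phi : A -> {ptws J -> K}) (psi : {ptws J -> K} -> A).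
Hypothesis phil : forall (a : K) (x y : A) (j : J), phi (a *: x + y) j = a * phi x j + phi y j.
Hypothesis phiK : cancel phi psi.
Hypothesis psiK : cancel psi phi.
Hypothesis phic : continuous phi.
Hypothesis psic : continuous psi.
Hypothesis mulc : continuous (fun p : A * A => p.1 * p.2).

Local Notation C := {classic J}.
Local Notation phi0 := (phi0 phil).
Local Notation phiZ := (phiZ phil).
Local Notation phiD := (phiD phil).
Local Notation phiB := (phiB phil).

Lemma phi_sum (I : Type) (r : seq I) (F : I -> A) k :
  phi (\sum_(i <- r) F i) k = \sum_(i <- r) phi (F i) k.
Proof.
elim: r => [|i r IH]; first by rewrite !big_nil phi0.
by rewrite !big_cons phiD IH.
Qed.

Variables (S FS : seq C) (j0 : C).
Hypothesis FSu : uniq FS.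
Hypothesis FSp : forall k, k \in S -> forall z, (forall l, l \in FS -> phi z l = 0) ->
  forall x y, phi (x * z * y) k = 0.

Let nF := size FS.
Definition piF (a : A) : 'rV[K]_nF := \row_i phi a (nth j0 FS i).
Definition sF (v : 'rV[K]_nF) : A :=
  psi (fun k : J => \sum_(i < nF) (if nth j0 FS i == (k : C) then v 0 i else 0)).

Lemma phi_sF v (k : C) :
  phi (sF v) k = \sum_(i < nF) (if nth j0 FS i == k then v 0 i else 0).
Proof. by rewrite /sF psiK. Qed.

Lemma piF_sF v : piF (sF v) = v.
Proof.
apply/rowP => i; rewrite mxE phi_sF (bigD1 i) //= eqxx big1 ?addr0 //.
move=> i' ne; case: ifP => // /eqP e; exfalso; move/eqP: ne; apply.
by apply: val_inj; apply/eqP; rewrite -(nth_uniq j0 (ltn_ord i') (ltn_ord i) FSu) e.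
Qed.

Lemma sF_lin a x y : sF (a *: x + y) = a *: sF x + sF y.
Proof.
apply: (phi_inj phiK) => k; rewrite phil !phi_sF big_distrr -big_split /=.
by apply: eq_bigr => i _; rewrite !mxE; case: ifP => _; rewrite ?mulr0 ?addr0.
Qed.

Lemma piF_lin a x y : piF (a *: x + y) = a *: piF x + piF y.
Proof. by apply/rowP => i; rewrite !mxE phil. Qed.

Lemma vanish_FS a l : l \in FS -> phi (a - sF (piF a)) l = 0.
Proof.
move=> lF; rewrite phiB phi_sF.
have li : (index l FS < nF)%N by rewrite index_mem.
rewrite (bigD1 (Ordinal li)) //= nth_index // eqxx mxE nth_index // big1 ?addr0 ?subrr //.
move=> i' ne; case: ifP => // /eqP e; exfalso; move/eqP: ne; apply.
apply: val_inj => /=; by rewrite -e index_uniq.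
Qed.

Let eF (i : 'I_nF) : 'rV[K]_nF := delta_mx 0 i.
Let X := ('I_(size S) * 'I_nF * 'I_nF)%type.
Let ev (i : 'I_#|{: X}|) : X := enum_val i.
Definition gam (a : A) : 'rV[K]_#|{: X}| :=
  \row_i phi (sF (eF (ev i).1.2) * a * sF (eF (ev i).2)) (nth j0 S (ev i).1.1).

Lemma gam_lin a x y : gam (a *: x + y) = a *: gam x + gam y.
Proof.
apply/rowP => i; rewrite !mxE mulrDr mulrDl -scalerAr -scalerAl phil.
done.
Qed.

Lemma sF_sum (v : 'rV[K]_nF) : sF v = \sum_(i < nF) v 0 i *: sF (eF i).
Proof.
apply: (phi_inj phiK) => k; rewrite phi_sum phi_sF.
apply: eq_bigr => i _; rewrite phiZ phi_sF.
rewrite (bigD1 i) //= big1 ?addr0; last first.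
  by move=> i' ne; rewrite /eF mxE /= eq_sym (negbTE ne) /=; case: ifP.
rewrite /eF mxE !eqxx /=; case: ifP => _; by rewrite ?mulr1 ?mulr0.
Qed.

Lemma gam_ker a : gam a = 0 <-> forall k, k \in S -> forall x y, phi (x * a * y) k = 0.
Proof.
split; last first.
  move=> H; apply/rowP => i; rewrite !mxE; apply: H.
  by apply: mem_nth.
move=> Hg k kS x y.
pose x0 := sF (piF x); pose y0 := sF (piF y).
have E1 : phi (x * a * y) k = phi (x0 * a * y0) k.
  have -> : x * a * y = 1 * (x - x0) * (a * y) + (x0 * a) * (y - y0) * 1 + x0 * a * y0.
    by rewrite mul1r mulr1 mulrBl mulrBr !mulrA addrA subrK subrK.
  have v1 : forall l, l \in FS -> phi (x - x0) l = 0 by move=> l; exact: vanish_FS.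
  have v2 : forall l, l \in FS -> phi (y - y0) l = 0 by move=> l; exact: vanish_FS.
  by rewrite !phiD (FSp kS v1) (FSp kS v2) !add0r.
rewrite E1 /x0 /y0 sF_sum mulr_suml mulr_suml phi_sum big1 // => p _.
rewrite [sF (piF y)]sF_sum mulr_sumr phi_sum big1 // => q _.
rewrite -scalerAl -scalerAl -scalerAr !phiZ.
have ki : (index k S < size S)%N by rewrite index_mem.
have := congr1 (fun M : 'rV[K]_#|{: X}| => M 0 (enum_rank (((Ordinal ki, p), q) : X))) Hg.
by rewrite !mxE /ev enum_rankK /= nth_index // => ->; rewrite !mulr0.
Qed.

Lemma piF_cont : continuous piF.
Proof.
apply: mx_cont => i j; rewrite /piF.
have -> : (fun a => (\row_i0 phi a (nth j0 FS i0)) i j) = (fun a => phi a (nth j0 FS j)).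
  by apply: funext => a; rewrite mxE.
exact: (comp_cont phic (@eval_cont K J _)).
Qed.

Lemma datum : exists n (G : A -> 'rV[K]_n) (P : 'rV[K]_n -> A),
  [/\ (forall a x y, G (a *: x + y) = a *: G x + G y),
      (forall a x y, P (a *: x + y) = a *: P x + P y),
      (forall u, G (P u) = u),
      (forall a, G a = 0 <-> forall k, k \in S -> forall x y, phi (x * a * y) k = 0) &
      continuous G].
Proof.
pose H := mxof (fun v => gam (sF v)).
have gamE : forall a, gam a = piF a *m H.
  move=> a; rewrite mxofE; last first.
    by move=> c u w; rewrite sF_lin gam_lin.
  apply/eqP; rewrite -subr_eq0; apply/eqP.
  have -> : gam a - gam (sF (piF a)) = gam (a - sF (piF a)).
    by rewrite [in RHS]addrC -[in RHS]scaleN1r gam_lin scaleN1r addrC.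
  apply/gam_ker => k kS x y; apply: FSp => // l lF; exact: vanish_FS.
have [B HB] := row_fullP (col_base_full H).
exists (\rank H), (fun a => piF a *m col_base H), (fun u => sF (u *m B)); split.
- by move=> c x y; rewrite piF_lin mulmxDl scalemxAl.
- by move=> c x y; rewrite mulmxDl -scalemxAl sF_lin.
- by move=> u; rewrite piF_sF -mulmxA HB mulmx1.
- move=> a; have gG : gam a = (piF a *m col_base H) *m row_base H.
    by rewrite gamE -mulmxA mulmx_base.
  rewrite -gam_ker gG; split.
    by move=> ->; rewrite mul0mx.
  by move=> /eqP; rewrite mulmx_free_eq0 ?row_base_free // => /eqP.
- have lc : continuous (fun u : 'rV[K]_nF => u *m col_base H).
    by apply: linmxmx_cont => c x y; rewrite mulmxDl scalemxAl.
  exact: (comp_cont piF_cont lc).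
Qed.
End Datum.


Section Main.
Variables (K : numFieldType) (g : topologicalLmodType K) (br : g -> g -> g).
Variables (V : topAlgType K) (nu : g -> V).
Hypothesis nuL : cont_lie_morph br nu.
Hypothesis Hfd : forall (F : topAlgType K), fd_alg F ->
     forall f : g -> F, cont_lie_morph br f ->
       exists! f' : V -> F, cont_alg_morph f' /\ f = f' \o nu.
Variables (A : topAlgType K) (J : Type) (phi : A -> {ptws J -> K}) (psi : {ptws J -> K} -> A).
Hypothesis phil : forall (a : K) (x y : A) (j : J), phi (a *: x + y) j = a * phi x j + phi y j.
Hypothesis phiK : cancel phi psi.
Hypothesis psiK : cancel psi phi.
Hypothesis phic : continuous phi.
Hypothesis psic : continuous psi.
Hypothesis mulc : continuous (fun p : A * A => p.1 * p.2).
Variable f : g -> A.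
Hypothesis fL : cont_lie_morph br f.

Local Notation C := {classic J}.
Local Notation phi0 := (phi0 phil).
Local Notation phiZ := (phiZ phil).
Local Notation phiD := (phiD phil).
Local Notation phiB := (phiB phil).

Definition Data := {n : nat & ((A -> 'rV[K]_n) * ('rV[K]_n -> A) * (V -> A))%type}.

Definition Gof (D : Data) : A -> 'rV[K]_(projT1 D) := (projT2 D).1.1.
Definition Pof (D : Data) : 'rV[K]_(projT1 D) -> A := (projT2 D).1.2.
Definition cof (D : Data) : V -> A := (projT2 D).2.
Arguments Gof : clear implicits.
Arguments Pof : clear implicits.
Arguments cof : clear implicits.

Definition okS (S : seq C) (D : Data) : Prop :=
  [/\ (forall a x y, Gof D (a *: x + y) = a *: Gof D x + Gof D y),
      (forall a x y, Pof D (a *: x + y) = a *: Pof D x + Pof D y),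
      (forall u, Gof D (Pof D u) = u),
      (forall a, Gof D a = 0 <-> forall k, k \in S -> forall x y, phi (x * a * y) k = 0) &
      [/\ continuous (Gof D),
      goodG nu f (Gof D) (cof D) &
      forall d, goodG nu f (Gof D) d -> forall v, Gof D (d v) = Gof D (cof D v)]].

Definition Fsel (j : J) : seq J := projT1 (cid (fin_supp phil phiK psiK phic psic mulc j)).
Lemma FselP j z : (forall k, List.In k (Fsel j) -> phi z k = 0) ->
  forall x y, phi (x * z * y) j = 0.
Proof. exact: (projT2 (cid (fin_supp phil phiK psiK phic psic mulc j))). Qed.

Lemma exS (S : seq C) (j0 : C) : exists D, okS S D.
Proof.
pose FS := undup (flatten (map (fun k : C => (Fsel k : seq C)) S)).
have FSu : uniq FS by exact: undup_uniq.
have FSp : forall k, k \in S -> forall z, (forall l, l \in FS -> phi z l = 0) ->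
    forall x y, phi (x * z * y) k = 0.
  move=> k kS z Hz; apply: FselP => l /(@In_mem C) lF; apply: Hz.
  rewrite mem_undup; apply/flattenP; exists (Fsel k : seq C) => //.
  by apply/mapP; exists k.
have [n [G [P [Gl Pl GP Gk Gc]]]] := datum phil phiK psiK phic j0 FSu FSp.
have Gid : forall a x, G a = 0 -> G (x * a) = 0 /\ G (a * x) = 0.
  move=> a x /Gk H; split; apply/Gk => k kS x' y'.
    by rewrite mulrA H.
  have -> : x' * (a * x) * y' = x' * a * (x * y') by rewrite !mulrA.
  by rewrite H.
have [c [cg cU]] := rep_any nuL Hfd mulc fL Gl Pl GP Gid Gc.
by exists (existT _ n (G, P, c)); split.
Qed.

Section OK.
Variables (S : seq C) (D : Data).
Hypothesis okD : okS S D.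
Local Notation G := (Gof D).
Local Notation P := (Pof D).

Lemma okGB a a' : G (a - a') = G a - G a'.
Proof. by case: okD => Gl _ _ _ _; rewrite addrC -scaleN1r Gl scaleN1r addrC. Qed.

Lemma okker a a' : G a = G a' -> forall k, k \in S -> forall x y, phi (x * a * y) k = phi (x * a' * y) k.
Proof.
case: okD => _ _ _ Gk _ e k kS x y.
have : G (a - a') = 0 by rewrite okGB e subrr.
move/Gk/(_ k kS x y); rewrite mulrBr mulrBl phiB.
by move/eqP; rewrite subr_eq0 => /eqP.
Qed.

Lemma okfactor k : k \in S -> forall a a', G a = G a' -> phi a k = phi a' k.
Proof. by move=> kS a a' e; have := okker e kS 1 1; rewrite !mul1r !mulr1. Qed.

Lemma okideal a a' x : G a = G a' -> G (x * a) = G (x * a') /\ G (a * x) = G (a' * x).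
Proof.
case: okD => _ _ _ Gk _ e.
split; apply/eqP; rewrite -subr_eq0 -okGB; apply/eqP; apply/Gk => k kS x' y'.
  by rewrite mulrBr mulrBl phiB !mulrA (okker e kS) subrr.
rewrite mulrBr mulrBl phiB.
have -> : x' * (a * x) * y' = x' * a * (x * y') by rewrite !mulrA.
have -> : x' * (a' * x) * y' = x' * a' * (x * y') by rewrite !mulrA.
by rewrite (okker e kS) subrr.
Qed.

Lemma okcont (d : V -> A) k : k \in S -> continuous (fun v => G (d v)) ->
  continuous (fun v => phi (d v) k).
Proof.
case: okD => _ Pl GP _ _ kS dc.
have -> : (fun v => phi (d v) k) = (fun v => phi (P (G (d v))) k).
  by apply: funext => v; apply: okfactor => //; rewrite GP.
have lc : continuous (fun u : 'rV[K]_(projT1 D) => (phi (P u) k : K^o)).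
  by apply: linmxK_cont => a x y; rewrite Pl phil.
exact: (comp_cont dc lc).
Qed.
End OK.

Lemma oktransfer S1 S2 D1 D2 : okS S1 D1 -> okS S2 D2 ->
  {subset S1 <= S2} -> forall v, Gof D1 (cof D2 v) = Gof D1 (cof D1 v).
Proof.
move=> ok1 ok2 sub.
have fac : forall a a', Gof D2 a = Gof D2 a' -> Gof D1 a = Gof D1 a'.
  move=> a a' e; apply/eqP; rewrite -subr_eq0 -(okGB ok1); apply/eqP.
  case: ok1 => _ _ _ Gk _; apply/Gk => k kS x y.
  by rewrite mulrBr mulrBl phiB (okker ok2 e (sub _ kS)) subrr.
case: (ok1) => G1l _ _ _ [_ _ U1].
case: (ok2) => _ P2l G2P _ [_ [c1 c2 c3 c4 c5] _].
apply: U1; split => //.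
- by move=> v w; apply: fac; apply: c2.
- by apply: fac.
- by move=> x; apply: fac.
- have -> : (fun v => Gof D1 (cof D2 v)) = (fun v => Gof D1 (Pof D2 (Gof D2 (cof D2 v)))).
    by apply: funext => v; apply: fac; rewrite G2P.
  have lc : continuous (fun u : 'rV[K]_(projT1 D2) => Gof D1 (Pof D2 u)).
    by apply: linmxmx_cont => a x y; rewrite P2l G1l.
  exact: (comp_cont c5 lc).
Qed.

Definition Dj (j : J) : Data := projT1 (cid (exS [:: (j : C)] j)).
Lemma okDj j : okS [:: (j : C)] (Dj j).
Proof. exact: (projT2 (cid (exS [:: (j : C)] j))). Qed.
Definition cj j := cof (Dj j).
Definition fP (v : V) : A := psi (fun j => phi (cj j v) j).

Lemma mem1 (j : J) : (j : C) \in [:: (j : C)].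
Proof. by rewrite inE eqxx. Qed.

Lemma key1 j v : Gof (Dj j) (fP v) = Gof (Dj j) (cj j v).
Proof.
have [D' ok'] := exS ((j : C) :: (Fsel j : seq C)) j.
have sub_j : {subset [:: (j : C)] <= (j : C) :: (Fsel j : seq C)}.
  by move=> k; rewrite inE => /eqP ->; rewrite inE eqxx.
have z0 : forall k, List.In k (Fsel j) -> phi (fP v - cof D' v) k = 0.
  move=> k kF; rewrite phiB /fP psiK.
  have sub_k : {subset [:: (k : C)] <= (j : C) :: (Fsel j : seq C)}.
    move=> l; rewrite inE => /eqP ->; rewrite inE; apply/orP; right.
    exact/(@In_mem C).
  have := oktransfer (okDj k) ok' sub_k v.
  move/(okfactor (okDj k) (mem1 k)) => ->; by rewrite subrr.
have : Gof (Dj j) (fP v - cof D' v) = 0.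
  case: (okDj j) => _ _ _ Gk _; apply/Gk => k; rewrite inE => /eqP -> x y.
  exact: FselP.
rewrite (okGB (okDj j)) => /eqP; rewrite subr_eq0 => /eqP ->.
exact: (oktransfer (okDj j) ok' sub_j v).
Qed.

Theorem part1 : exists! f' : V -> A, cont_alg_morph f' /\ f = f' \o nu.
Proof.
have fac := fun j => okfactor (okDj j) (mem1 j).
have phifP : forall v j, phi (fP v) j = phi (cof (Dj j) v) j by move=> v j; rewrite /fP psiK.
exists fP; split; first split; first split.
- move=> a x y; apply: (phi_inj phiK) => j.
  case: (okDj j) => _ _ _ _ [_ [c1 _ _ _ _] _].
  by rewrite phil !phifP c1 phil.
- move=> x y; apply: (phi_inj phiK) => j.
  case: (okDj j) => _ _ _ _ [_ [_ c2 _ _ _] _].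
  rewrite phifP; apply: fac; rewrite c2.
  have [_ e1] := okideal (okDj j) (fP y) (key1 j x).
  have [e2 _] := okideal (okDj j) (cj j x) (key1 j y).
  by rewrite e1 e2.
- apply: (phi_inj phiK) => j; rewrite phifP; apply: fac.
  by case: (okDj j) => _ _ _ _ [_ [_ _ c3 _ _] _].
- apply: (comp_cont _ psic); apply: ptws_cont => j.
  case: (okDj j) => _ _ _ _ [_ [_ _ _ _ c5] _].
  exact: (okcont (okDj j) (mem1 j) c5).
- apply: funext => x /=; apply: (phi_inj phiK) => j; rewrite phifP; apply: fac.
  by case: (okDj j) => _ _ _ _ [_ [_ _ _ c4 _] _]; rewrite c4.
- move=> h [[h1 h2 h3 h4] hf]; apply: funext => v.
  apply: (phi_inj phiK) => j; rewrite phifP; apply: fac.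
  case: (okDj j) => Gl _ _ _ [Gc _ U]; apply/esym; apply: (U h); split => //.
  + by move=> w1 w2; rewrite h2.
  + by rewrite h3.
  + by move=> x; rewrite hf.
  + exact: (comp_cont h4 Gc).
Qed.
End Main.


Lemma part1_gen (K : numFieldType) (g : topologicalLmodType K) (br : g -> g -> g)
  (V : topAlgType K) (nu : g -> V) :
  cont_lie_morph br nu ->
  (forall (F : topAlgType K), fd_alg F ->
     forall f : g -> F, cont_lie_morph br f ->
       exists! f' : V -> F, cont_alg_morph f' /\ f = f' \o nu) ->
  (forall (A : topAlgType K), wc_alg A ->
     forall f : g -> A, cont_lie_morph br f ->
       exists! f' : V -> A, cont_alg_morph f' /\ f = f' \o nu).
Proof.
move=> nuL Hfd A [[J [phi [psi [phil phiK psiK phic psic]]]] mulc] f fL.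
exact: (part1 nuL Hfd phil phiK psiK phic psic mulc fL).
Qed.

Unset Implicit Arguments.
Set Strict Implicit.
Theorem proposition1p9 (R : realType) (b : bool) :
  let K : numFieldType := if b then (R : numFieldType) else (R[i] : numFieldType) in
  forall (g : topologicalLmodType K) (br : g -> g -> g),
  is_top_lie br -> profinite_dim br ->
  forall (V : topAlgType K) (nu : g -> V),
  wc_alg V -> cont_lie_morph br nu ->
  (forall (F : topAlgType K), fd_alg F ->
     forall f : g -> F, cont_lie_morph br f ->
       exists! f' : V -> F, cont_alg_morph f' /\ f = f' \o nu) ->
  (forall (A : topAlgType K), wc_alg A ->
     forall f : g -> A, cont_lie_morph br f ->
       exists! f' : V -> A, cont_alg_morph f' /\ f = f' \o nu) /\
  (forall (U : topAlgType K) (lam : g -> U), is_wc_envelope br U lam ->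
     exists (phi : V -> U) (psi : U -> V),
       [/\ cont_alg_morph phi, cont_alg_morph psi,
           cancel phi psi, cancel psi phi & phi \o nu = lam]).
Proof.
move=> K g br _ _ V nu wcV nuL Hfd.
have P1 := part1_gen nuL Hfd.
split => // U lam [wcU lamL UH].
have [phi0 [[pa pe] _]] := P1 U wcU lam lamL.
have [psi0 [[qa qe] _]] := UH V wcV nu nuL.
have [w1 [_ UV]] := P1 V wcV nu nuL.
have [w2 [_ UU]] := UH U wcU lam lamL.
have e1 : psi0 \o phi0 = id.
  rewrite -(UV (psi0 \o phi0)); last by split; [exact: comp_alg|rewrite -compA -pe].
  by apply: UV; split; [exact: id_alg|].
have e2 : phi0 \o psi0 = id.
  rewrite -(UU (phi0 \o psi0)); last by split; [exact: comp_alg|rewrite -compA -qe].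
  by apply: UU; split; [exact: id_alg|].
exists phi0, psi0; split => //.
- by move=> x; have := congr1 (fun F => F x) e1.
- by move=> x; have := congr1 (fun F => F x) e2.
Qed.
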